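(* $S\mathbb{R}^{n\times n\times p}_+=(S\mathbb{R}^{n\times n\times p}_+)^*$, where the dual cone is taken in the space $S\mathbb{R}^{n\times n\times p}$ with respect to the inner product $\langle\cdot,\cdot\rangle$, i.e. $(S\mathbb{R}^{n\times n\times p}_+)^*=\{\mathcal{B}\in S\mathbb{R}^{n\times n\times p}:\langle\mathcal{A},\mathcal{B}\rangle\ge0\ \text{for all}\ \mathcal{A}\in S\mathbb{R}^{n\times n\times p}_+\}$.
   Context: For $\mathcal{A}\in\mathbb{R}^{m\times n\times p}$ let $A^{(k)}\in\mathbb{R}^{m\times n}$ ($k\in[p]$) be its frontal slices, $(A^{(k)})_{ij}=a_{ijk}$. $\mathrm{bcirc}(\mathcal{A})\in\mathbb{R}^{mp\times np}$ is the block circulant matrix whose $(i,j)$ block ($i,j\in[p]$) is $A^{(((i-j)\bmod p)+1)}$. $\mathrm{unfold}(\mathcal{A})$ stacks $A^{(1)},\dots,A^{(p)}$ vertically, $\mathrm{fold}$ is its inverse, and the T-product is $\mathcal{A}*\mathcal{B}=\mathrm{fold}(\mathrm{bcirc}(\mathcal{A})\,\mathrm{unfold}(\mathcal{B}))$. The transpose $\mathcal{A}^\top$ has frontal slices $(A^{(1)})^\top,(A^{(p)})^\top,\dots,(A^{(2)})^\top$; $S\mathbb{R}^{n\times n\times p}$ is the set of $\mathcal{A}\in\mathbb{R}^{n\times n\times p}$ with $\mathcal{A}^\top=\mathcal{A}$. The inner product is $\langle\mathcal{A},\mathcal{B}\rangle=\sum a_{ijk}b_{ijk}$. $S\mathbb{R}^{n\times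 n\times p}_+$ is the set of symmetric T-positive semidefinite tensors: $\mathcal{A}\in S\mathbb{R}^{n\times n\times p}$ with $\langle\mathcal{X},\mathcal{A}*\mathcal{X}\rangle\ge0$ for all $\mathcal{X}\in\mathbb{R}^{n\times1\times p}$. *)

(* Defs.v *)
From HB Require Import structures.
From mathcomp Require Import all_boot all_order all_algebra.
Set Implicit Arguments. Unset Strict Implicit. Unset Printing Implicit Defensive.
Import Order.TTheory GRing.Theory Num.Theory.
Local Open Scope ring_scope.

(* A third-order tensor in R^{m x n x p}, represented by its p frontal
   slices A^{(k)} in R^{m x n}; slices are indexed 0-based by k : 'I_p,
   so slice k here is A^{(k+1)} in the paper, and entry a_{ijk} is
   (A k) i j. *)
Definition tensor (R : Type) (m n p : nat) := {ffun 'I_p -> 'M[R]_(m, n)}.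

(* slice access with a natural-number index (zero outside the range) *)
Definition slice (R : pzRingType) m n p (A : tensor R m n p) (k : nat)
  : 'M[R]_(m, n) :=
  match @insub nat (fun k => k < p)%N _ k with
  | Some i => A i | None => 0 end.

(* T-product A * B = fold(bcirc(A) unfold(B)).  Block (i,j) of bcirc(A)
   is A^{(((i-j) mod p)+1)}, so frontal slice k of the product is
   sum_j A^{((k-j) mod p)} B^{(j)} (0-based indices). *)
Definition tprod (R : pzRingType) m n q p (A : tensor R m n p)
  (B : tensor R n q p) : tensor R m q p :=
  [ffun k : 'I_p => \sum_(j < p) slice A ((k + p - j) %% p) *m B j].

(* Tensor transpose: slices (A^(1))^T, (A^(p))^T, ..., (A^(2))^T,
   i.e. 0-based slice k is (A^{((p - k) mod p)})^T. *)
Definition ttr (R : pzRingType) m n p (A : tensor R m n p) : tensor R n m p :=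
  [ffun k : 'I_p => (slice A ((p - k) %% p))^T].

Definition tinner (R : pzRingType) m n p (A B : tensor R m n p) : R :=
  \sum_(k < p) \sum_(i < m) \sum_(j < n) A k i j * B k i j.

Definition tsym (R : pzRingType) n p (A : tensor R n n p) : Prop := ttr A = A.

Definition tpsd (R : numDomainType) n p (A : tensor R n n p) : Prop :=
  tsym A /\ forall X : tensor R n 1 p, 0 <= tinner X (tprod A X).

Definition tpsd_dual (R : numDomainType) n p (B : tensor R n n p) : Prop :=
  tsym B /\ forall A : tensor R n n p, tpsd A -> 0 <= tinner A B.

(* Main.v *)
Require Import Defs.
From HB Require Import structures.
From mathcomp Require Import all_boot all_order all_algebra.
From mathcomp Require Import ring lra.
Set Implicit Arguments. Unset Strict Implicit. Unset Printing Implicit Defensive.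
Import Order.TTheory GRing.Theory Num.Theory.
Local Open Scope ring_scope.
Section Key.
Variables (R : rcfType) (I : finType).
Implicit Types (N M : I -> I -> R) (u v x : I -> R).

Definition Bf N u v := \sum_i \sum_j u i * N i j * v j.
Definition psdf N := forall x, 0 <= Bf N x x.
Definition symf N := forall i j, N i j = N j i.
Definition dl (k : I) : I -> R := fun i => (i == k)%:R.

Lemma sumd (F : I -> R) k : \sum_m F m * (m == k)%:R = F k.
Proof.
rewrite (bigD1 k) //= eqxx mulr1 big1 ?addr0 // => m /negPf ->; by rewrite mulr0.
Qed.

Lemma BfDl N u1 u2 v : Bf N (fun i => u1 i + u2 i) v = Bf N u1 v + Bf N u2 v.
Proof.
rewrite /Bf -big_split; apply: eq_bigr => i _; rewrite -big_split.
by apply: eq_bigr => j _ /=; ring.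
Qed.

Lemma BfDr N u v1 v2 : Bf N u (fun i => v1 i + v2 i) = Bf N u v1 + Bf N u v2.
Proof.
rewrite /Bf -big_split; apply: eq_bigr => i _; rewrite -big_split.
by apply: eq_bigr => j _ /=; ring.
Qed.

Lemma BfZl N a u v : Bf N (fun i => a * u i) v = a * Bf N u v.
Proof.
rewrite /Bf mulr_sumr; apply: eq_bigr => i _; rewrite mulr_sumr.
by apply: eq_bigr => j _ /=; ring.
Qed.

Lemma BfZr N a u v : Bf N u (fun i => a * v i) = a * Bf N u v.
Proof.
rewrite /Bf mulr_sumr; apply: eq_bigr => i _; rewrite mulr_sumr.
by apply: eq_bigr => j _ /=; ring.
Qed.

Lemma Bf_dl N k v : Bf N (dl k) v = \sum_j N k j * v j.
Proof.
rewrite /Bf -(sumd (fun i => \sum_j N i j * v j) k).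
apply: eq_bigr => i _; rewrite mulr_suml; apply: eq_bigr => j _ /=.
rewrite /dl; ring.
Qed.

Lemma Bf_dr N u k : Bf N u (dl k) = \sum_i u i * N i k.
Proof.
rewrite /Bf; apply: eq_bigr => i _; exact: sumd.
Qed.

Lemma Bf_2 N a b i j :
  Bf N (fun l => a * dl i l + b * dl j l) (fun l => a * dl i l + b * dl j l)
  = a * a * N i i + a * b * N i j + b * a * N j i + b * b * N j j.
Proof.
rewrite BfDl !BfDr !BfZl !BfZr !Bf_dl !sumd.
rewrite -!(sumd (fun m => N _ m) _).
rewrite /dl. ring.
Qed.


Lemma diag_ge0 N : psdf N -> forall i, 0 <= N i i.
Proof.
move=> hN i; have := hN (fun l => 1 * dl i l + 0 * dl i l).
by rewrite Bf_2 !mul0r !mulr0 !addr0 !mul1r mul0r addr0.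
Qed.

Lemma zero_row N : psdf N -> symf N -> forall i, N i i = 0 -> forall j, N i j = 0.
Proof.
move=> hN sN i h0 j; case: (eqVneq (N i j) 0) => // nz; exfalso.
set t := - (N j j + 1) / (2 * N i j).
have := hN (fun l => t * dl i l + 1 * dl j l).
rewrite Bf_2 h0 (sN j i).
have -> : t * t * 0 + t * 1 * N i j + 1 * t * N i j + 1 * 1 * N j j = -1.
  by rewrite /t; field.
by rewrite ler0N1.
Qed.


Lemma key M N : psdf M -> psdf N -> symf N -> 0 <= \sum_i \sum_j M i j * N i j.
Proof.
move=> hM.
suff H : forall n (S : {set I}) N, #|S| = n -> psdf N -> symf N ->
    (forall i j, i \notin S -> N i j = 0) -> 0 <= \sum_i \sum_j M i j * N i j.
  by move=> hN sN; apply: (H _ setT N erefl hN sN) => i j; rewrite in_setT.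
elim=> [|n IH] S {}N hS hN sN supp.
  have S0 : S = set0 by apply/eqP; rewrite -cards_eq0 hS.
  rewrite big1 // => i _; rewrite big1 // => j _.
  by rewrite supp ?mulr0 // S0 in_set0.
have [i0 iS] : exists i0, i0 \in S by apply/card_gt0P; rewrite hS.
have hS' : #|S :\ i0| = n by move: hS; rewrite (cardsD1 i0) iS add1n => -[].
case: (eqVneq (N i0 i0) 0) => h0.
  apply: (IH (S :\ i0) N) => // i j.
  rewrite in_setD1 negb_and negbK => /orP [/eqP -> | /supp -> //].
  exact: zero_row.
have a_gt0 : 0 < N i0 i0 by rewrite lt_def h0 diag_ge0.
have a_neq0 : N i0 i0 != 0 by [].
set a := N i0 i0 in a_gt0 a_neq0 *.
pose c := fun i => N i i0.
pose N' := fun i j => N i j - c i * c j / a.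
have -> : \sum_i \sum_j M i j * N i j = \sum_i \sum_j M i j * N' i j + Bf M c c / a.
  rewrite /Bf mulr_suml -big_split; apply: eq_bigr => i _.
  rewrite mulr_suml -big_split; apply: eq_bigr => j _ /=.
  by rewrite /N'; field.
apply: addr_ge0; last by apply: divr_ge0 => //; exact: ltW.
apply: (IH (S :\ i0)) => //.
- move=> x.
  set s := \sum_j x j * c j.
  have E1 : Bf N' x x = Bf N x x - s * s / a.
    rewrite /Bf /s mulr_suml mulr_suml -sumrB; apply: eq_bigr => i _.
    rewrite mulr_sumr mulr_suml -sumrB; apply: eq_bigr => j _ /=.
    by rewrite /N'; field.
  have E2 : Bf N (fun l => x l + (- (s / a)) * dl i0 l)
                 (fun l => x l + (- (s / a)) * dl i0 l) = Bf N x x - s * s / a.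
    rewrite BfDl !BfDr !BfZl !BfZr !Bf_dl !Bf_dr sumd.
    have -> : \sum_j N i0 j * x j = s.
      by apply: eq_bigr => k _; rewrite sN mulrC.
    have -> : \sum_i x i * N i i0 = s by [].
    by rewrite -/a; field.
  rewrite E1 -E2; exact: hN.
- by move=> i j; rewrite /N' (sN i j) (mulrC (c i)).
- move=> i j; rewrite in_setD1 negb_and negbK => /orP [/eqP -> | iS'].
    by rewrite /N' /c -/a mulrAC divff // mul1r sN subrr.
  by rewrite /N' /c (supp i j) ?(supp i i0) // !mul0r subrr.
Qed.

End Key.
Section T.
Variable R : rcfType.

Lemma sliceE m n p (A : tensor R m n p.+1) (k : 'I_p.+1) : slice A k = A k.
Proof. rewrite /slice insubT // => H; f_equal; exact: val_inj. Qed.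

Lemma val_sub p (k j : 'I_p.+1) : ((k + p.+1 - j) %% p.+1)%N = nat_of_ord (k - j).
Proof. rewrite /= modnDmr addnBA //. by apply: ltnW. Qed.

Lemma val_opp p (k : 'I_p.+1) : ((p.+1 - k) %% p.+1)%N = nat_of_ord (- k).
Proof. by []. Qed.

Lemma tprodE m n q p (A : tensor R m n p.+1) (X : tensor R n q p.+1) k :
  tprod A X k = \sum_j A (k - j) *m X j.
Proof. by rewrite ffunE; apply: eq_bigr => j _; rewrite val_sub sliceE. Qed.

Lemma ttrE m n p (A : tensor R m n p.+1) k : ttr A k = (A (- k))^T.
Proof. by rewrite ffunE val_opp sliceE. Qed.

Lemma sum_pair (T1 T2 : finType) (F : T1 * T2 -> R) :
  \sum_u F u = \sum_a \sum_b F (a, b).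
Proof. by rewrite pair_big; apply: eq_bigr => -[]. Qed.

Variables n p : nat.
Local Notation P := p.+1.
Local Notation I := ('I_P * 'I_n)%type.

Definition MA (A : tensor R n n P) : I -> I -> R :=
  fun u v => A (u.1 - v.1) u.2 v.2.
Definition vec (X : tensor R n 1 P) : I -> R := fun u => X u.1 u.2 0.

Lemma quadE A X : tinner X (tprod A X) = Bf (MA A) (vec X) (vec X).
Proof.
rewrite /tinner /Bf sum_pair; apply: eq_bigr => k _.
apply: eq_bigr => i _ /=.
rewrite big_ord1 sum_pair tprodE summxE mulr_sumr; apply: eq_bigr => j _.
rewrite mxE mulr_sumr; apply: eq_bigr => l _.
by rewrite /MA /vec /= mulrA.
Qed.

Lemma psd_MA A : (forall X : tensor R n 1 P, 0 <= tinner X (tprod A X)) -> psdf (MA A).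
Proof.
move=> h x; pose X : tensor R n 1 P := [ffun k => \matrix_(i < n, j < 1) x (k, i)].
have := h X; rewrite quadE.
suff -> : Bf (MA A) (vec X) (vec X) = Bf (MA A) x x by [].
rewrite /Bf; apply: eq_bigr => -[k i] _; apply: eq_bigr => -[j l] _.
by rewrite /vec !ffunE !mxE.
Qed.

Lemma tsymE (A : tensor R n n P) : tsym A -> forall k i l, A k i l = A (- k) l i.
Proof.
move=> sA k i l; have := congr1 (fun T : tensor R n n P => T k i l) sA.
by rewrite /= ttrE mxE => <-.
Qed.

Lemma sym_MA A : tsym A -> symf (MA A).
Proof. by move=> sA u v; rewrite /MA (tsymE sA) opprB. Qed.

Lemma sum_MA A B :
  \sum_u \sum_v MA A u v * MA B u v = P%:R * tinner A B.
Proof.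
transitivity (\sum_k \sum_j \sum_i \sum_l A (k - j) i l * B (k - j) i l).
  rewrite sum_pair; apply: eq_bigr => k _.
  under eq_bigr => i _ do rewrite sum_pair.
  rewrite exchange_big; apply: eq_bigr => j _; apply: eq_bigr => i _.
  by apply: eq_bigr => l _.
rewrite mulr_natl -[X in _ *+ X](card_ord P) -sumr_const; apply: eq_bigr => k _.
rewrite (reindex_inj (@subrI _ k)) /=; apply: eq_bigr => j _.
by rewrite subKr.
Qed.


Definition XXt (X : tensor R n 1 P) : tensor R n n P :=
  [ffun m => \matrix_(i, l) \sum_k X k i 0 * X (k - m) l 0].

Lemma XXt_sym X : tsym (XXt X).
Proof.
apply/ffunP => m; apply/matrixP => i l.
rewrite ttrE !mxE !ffunE !mxE.
rewrite [RHS](reindex_inj (addIr m)); apply: eq_bigr => k _ /=.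
by rewrite opprK addrK mulrC.
Qed.

Lemma XXt_psd X (Y : tensor R n 1 P) : 0 <= tinner Y (tprod (XXt X) Y).
Proof.
rewrite quadE.
set y := vec Y.
have -> : Bf (MA (XXt X)) y y = (\sum_u \sum_v \sum_k
   ((y u * X (k + u.1) u.2 0) * (y v * X (k + v.1) v.2 0))).
  apply: eq_bigr => u _; apply: eq_bigr => v _.
  rewrite /MA ffunE mxE (reindex_inj (addIr u.1)) mulr_sumr mulr_suml.
  apply: eq_bigr => k _ /=.
  rewrite opprB -addrA subrKC; ring.
under eq_bigr => u _ do rewrite exchange_big.
rewrite exchange_big; apply: sumr_ge0 => k _.
by rewrite -big_distrlr /= -expr2 sqr_ge0.
Qed.

Lemma XXt_inner X B : tinner (XXt X) B = tinner X (tprod B X).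
Proof.
rewrite quadE /Bf sum_pair.
transitivity (\sum_k \sum_i \sum_m \sum_l X k i 0 * B m i l * X (k - m) l 0); last first.
  apply: eq_bigr => k _; apply: eq_bigr => i _.
  rewrite sum_pair (reindex_inj (@subrI _ k)); apply: eq_bigr => m _.
  by apply: eq_bigr => l _; rewrite /MA /vec /= subKr.
rewrite exchange_big.
under eq_bigr => i _ do rewrite exchange_big.
under eq_bigr => i _ do under eq_bigr => m _ do rewrite exchange_big.
rewrite exchange_big /tinner; apply: eq_bigr => m _; apply: eq_bigr => i _.
apply: eq_bigr => l _; rewrite ffunE mxE mulr_suml; apply: eq_bigr => k _.
by rewrite mulrAC.
Qed.

End T.

Theorem mainTheorem12 (R : rcfType) (n p : nat) (B : tensor R n n p) :
  tpsd B <-> tpsd_dual B.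
Proof.
case: p B => [|p] B.
  have sB : tsym B by apply/ffunP => -[].
  split=> _; split=> // *; rewrite /tinner big_ord0 //.
split=> [[sB hB] | [sB hB]]; split=> //.
  move=> A [sA hA].
  have := key (psd_MA hA) (psd_MA hB) (sym_MA sB).
  by rewrite sum_MA pmulr_rge0 // ltr0Sn.
move=> X; rewrite -XXt_inner; apply: hB; split; first exact: XXt_sym.
exact: XXt_psd.
Qed.
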